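(* Let $H$ be a connected graph on $t\ge 2$ vertices. If $h_H(\mathbf{x};K_q)$ has M-convex support for some $q\ge t$, then $h_H(\mathbf{x};G)$ has M-convex support for every antiferromagnetic weighted graph $G$.
   Context: A weighted graph $G$ on $[n]$ is a symmetric matrix with nonnegative entries $G(i,j)$ (loops allowed); it is antiferromagnetic if it has at most one positive eigenvalue, counted with multiplicity. $K_q$ is the loopless complete graph on $q$ vertices with $\{0,1\}$ weights. For a graph $H$, the $G$-chromatic function is the polynomial in $\mathbf{x}=(x_1,\dots,x_n)$ \[h_H(\mathbf{x};G)=\sum_{\phi:V(H)\to[n]}\prod_{uv\in E(H)}G(\phi(u),\phi(v))\prod_{v\in V(H)}x_{\phi(v)}.\] The support of a polynomial is the set of exponent vectors in $\mathbb{N}_0^n$ of monomials with nonzero coefficient. A set $S\subseteq\mathbb{N}_0^n$ is M-convex if for all $\mathbf{a},\mathbf{b}\in S$ and every $i$ with $a_i>b_i$ there is $j$ with $a_j<b_j$ and $\mathbf{a}-\mathbf{e}_i+\mathbf{e}_j\in S$. *)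

(* Defs.v *)
From HB Require Import structures.
From mathcomp Require Import all_boot all_order all_algebra.
From mathcomp Require Import Rstruct.
From mathcomp.multinomials Require Import mpoly.
Set Implicit Arguments. Unset Strict Implicit. Unset Printing Implicit Defensive.
Import Order.TTheory GRing.Theory Num.Theory.
Local Open Scope ring_scope.

Notation Real := Rdefinitions.R.

Definition simple_graph (t : nat) (e : rel 'I_t) : Prop :=
  (forall u v, e u v = e v u) /\ (forall u, ~~ e u u).

Definition connected_graph (t : nat) (e : rel 'I_t) : Prop :=
  forall u v, connect e u v.

Definition weighted_graph (n : nat) (G : 'M[Real]_n) : Prop :=
  G^T = G /\ (forall i j, 0 <= G i j).

(* Antiferromagnetic: at most one positive eigenvalue counted with
   multiplicity, i.e. the characteristic polynomial factors as
   prod (X - lambda) over the eigenvalue list s (with multiplicity)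
   and at most one lambda in s is positive. *)
Definition antiferromagnetic (n : nat) (G : 'M[Real]_n) : Prop :=
  exists s : seq Real,
    char_poly G = \prod_(x <- s) ('X - x%:P) /\ (count (fun x : Real => (0 < x)%R) s <= 1)%N.

Definition Kq (q : nat) : 'M[Real]_q := \matrix_(i, j) (i != j)%:R.

(* The G-chromatic function h_H(x; G), a polynomial in x_1..x_n. Each edge
   uv of H (unordered pair u < v with e u v) contributes G(phi u, phi v). *)
Definition chromatic_fun (t : nat) (e : rel 'I_t) (n : nat) (G : 'M[Real]_n)
  : {mpoly Real[n]} :=
  \sum_(phi : {ffun 'I_t -> 'I_n})
     (\prod_(p : 'I_t * 'I_t | ((p.1 < p.2)%N && e p.1 p.2)) G (phi p.1) (phi p.2))%:MP
     * \prod_(v : 'I_t) 'X_(phi v).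

Definition hsupport (n : nat) (p : {mpoly Real[n]}) : pred 'X_{1..n} :=
  fun m => m \in msupp p.

Definition M_convex (n : nat) (S : pred 'X_{1..n}) : Prop :=
  forall a b : 'X_{1..n}, S a -> S b ->
  forall i : 'I_n, (b i < a i)%N ->
  exists j : 'I_n, (a j < b j)%N /\
    exists c : 'X_{1..n}, S c /\
      c i = (a i).-1 /\ c j = (a j).+1 /\
      (forall k, k != i -> k != j -> c k = a k).

(* Main.v *)
Require Import Defs.
From HB Require Import structures.
From mathcomp Require Import all_boot all_order all_algebra.
From mathcomp Require Import Rstruct.
From mathcomp.multinomials Require Import mpoly.
From mathcomp Require Import perm.
From mathcomp.real_closed Require Import complex.
From mathcomp Require Import ring lra.
Set Warnings "-notation-overridden,-ambiguous-paths".
Set Implicit Arguments. Unset Strict Implicit. Unset Printing Implicit Defensive.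
Import Order.TTheory GRing.Theory Num.Theory.


Definition cntf (D T : finType) (f : D -> T) (k : T) : nat := #|[pred x | f x == k]|.

Definition updf (D : finType) (T : Type) (f : D -> T) (x0 : D) (j : T) : D -> T :=
  fun y => if y == x0 then j else f y.

Lemma cnt_upd (D T : finType) (f : D -> T) x0 j k :
  cntf (updf f x0 j) k + (f x0 == k) = cntf f k + (j == k).
Proof.
rewrite /cntf (cardD1 x0) [in RHS](cardD1 x0) !inE /updf eqxx.
have -> : #|[predD1 [pred x | (if x == x0 then j else f x) == k] & x0]| =
          #|[predD1 [pred x | f x == k] & x0]|.
  by apply: eq_card => y; rewrite !inE; case: (y == x0).
by case: (j == k); case: (f x0 == k); rewrite /= ?addnA ?addn0 // addnC.
Qed.

Lemma card_comp_sum (D T : finType) (f : D -> T) (P : pred T) :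
  #|[pred x | P (f x)]| = \sum_(v | P v) cntf f v.
Proof.
rewrite -sum1_card (partition_big f P); last by move=> x; rewrite inE.
apply: eq_bigr => v Pv.
rewrite /cntf -sum1_card; apply: eq_bigl => x; rewrite !inE.
by case: eqP => [->|]; rewrite ?Pv ?andbF.
Qed.

Lemma perm_of_counts (t : nat) (T : finType) (f g : 'I_t -> T) :
  (forall k, cntf f k = cntf g k) -> exists p : 'S_t, forall x, g (p x) = f x.
Proof.
move=> H.
have pe : perm_eq [seq f x | x <- enum 'I_t] [tuple g x | x < t].
  have -> : val [tuple g x | x < t] = [seq g x | x <- enum 'I_t].
    by rewrite /= -val_ord_tuple.
  apply/allP => k _ /=.
  have cE (h : 'I_t -> T) : count (pred1 k) [seq h x | x <- enum 'I_t] = cntf h k.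
    rewrite count_map /cntf cardE -size_filter /enum_mem filter_predT.
    by congr size; apply: eq_filter => x; rewrite !inE.
  by rewrite !cE H.
have [p Hp] := tuple_permP pe.
exists p => x.
have := congr1 (fun s => nth (f x) s x) Hp.
rewrite (nth_map x) ?size_enum_ord ?ltn_ord // nth_ord_enum => ->.
by rewrite -tnth_nth !tnth_mktuple.
Qed.

Lemma cnt_perm (t : nat) (T : finType) (f : 'I_t -> T) (p : 'S_t) k :
  cntf (fun u => f ((p^-1)%g u)) k = cntf f k.
Proof.
rewrite /cntf -(card_imset [pred x | f x == k] (@perm_inj _ p)).
apply: eq_card => u; rewrite !inE.
apply/idP/imsetP => [fk|[x xk ->]]; last by rewrite permK.
by exists ((p^-1)%g u); rewrite ?permKV.
Qed.

Lemma inj_into (t : nat) (X Y : {set 'I_t}) : #|X| <= #|Y| ->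
  exists tau : 'I_t -> 'I_t, {in X &, injective tau} /\ forall y, y \in X -> tau y \in Y.
Proof.
move=> XY.
have idx y : y \in X -> index y (enum X) < size (enum Y).
  move=> yX; rewrite -cardE; apply: (leq_trans _ XY).
  by rewrite cardE index_mem mem_enum.
exists (fun y => nth y (enum Y) (index y (enum X))); split.
  move=> y y' yX y'X /= E.
  move: E; rewrite [in RHS](set_nth_default y) ?idx // => /eqP.
  rewrite nth_uniq ?idx ?enum_uniq // => /eqP.
  by apply: (index_inj y); rewrite mem_enum.
by move=> y yX; have := mem_nth y (idx y yX); rewrite mem_enum.
Qed.


Section L1.
Variables (t : nat) (e : rel 'I_t).
Hypothesis eirr : irreflexive e.

Definition properc (T : Type) (c : 'I_t -> T) := forall x y, e x y -> c x <> c y.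

Definition MconvCol (T : finType) := forall c1 c2 : 'I_t -> T,
  properc c1 -> properc c2 -> forall i, cntf c2 i < cntf c1 i ->
  exists j, cntf c1 j < cntf c2 j /\ exists c3 : 'I_t -> T, properc c3 /\
    cntf c3 i = (cntf c1 i).-1 /\ cntf c3 j = (cntf c1 j).+1 /\
    forall k, k != i -> k != j -> cntf c3 k = cntf c1 k.

Lemma cnt_gt0 (T : finType) (c : 'I_t -> T) k : 0 < cntf c k -> exists x, c x = k.
Proof. by move=> /card_gt0P [x]; rewrite inE => /eqP; exists x. Qed.

Lemma cnt_in (T : finType) (c : 'I_t -> T) x : 0 < cntf c (c x).
Proof. by apply/card_gt0P; exists x; rewrite inE. Qed.

Lemma cnt_sum (T : finType) (c : 'I_t -> T) : \sum_k cntf c k = t.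
Proof.
by rewrite -(card_comp_sum c predT) -[RHS]card_ord; apply: eq_card.
Qed.

Lemma L1 q : t <= q -> MconvCol ('I_q) -> forall T : finType, MconvCol T.
Proof.
move=> tq HE T c1 c2 pc1 pc2 i Hi.
have [x0 cx0] := cnt_gt0 (leq_ltn_trans (leq0n _) Hi).
have [/existsP [j /andP [/eqP c1j c2j]]|noA] := boolP [exists j, (cntf c1 j == 0) && (0 < cntf c2 j)].
  exists j; split; first by rewrite c1j.
  have ij : i != j by apply/eqP => ij; move: Hi; rewrite ij c1j.
  exists (updf c1 x0 j); split; last first.
    have U k := cnt_upd c1 x0 j k.
    rewrite cx0 in U.
    split; first by have := U i; rewrite eqxx eq_sym (negbTE ij) addn0 addn1 => <-.
    split; first by have := U j; rewrite eqxx (negbTE ij) addn0 addn1.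
    by move=> k ki kj; have := U k; rewrite eq_sym (negbTE ki) eq_sym (negbTE kj) !addn0.
  have notj y : c1 y <> j.
    by move=> cyj; have := cnt_in c1 y; rewrite cyj c1j.
  move=> x y exy; rewrite /updf.
  case: eqP => [xx0|_]; case: eqP => [yx0|_].
  - by move: exy; rewrite xx0 yx0 eirr.
  - by move=> E; apply: (notj y); rewrite -E.
  - by apply: notj.
  - exact: pc1.
have B k : cntf c1 k = 0 -> cntf c2 k = 0.
  move=> c1k; apply/eqP; rewrite -leqn0 leqNgt; apply/negP => c2k.
  by move/negP: noA; apply; apply/existsP; exists k; rewrite c1k eqxx c2k.
pose S := enum [pred k | 0 < cntf c1 k].
have Suniq : uniq S := enum_uniq _.
have inS k : (k \in S) = (0 < cntf c1 k) by rewrite mem_enum.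
have sizeS : size S <= t.
  rewrite -cardE; apply: (leq_trans _ (eq_leq (cnt_sum c1))); rewrite -sum1_card.
  rewrite [X in _ <= X](bigID (fun k => 0 < cntf c1 k)) /= -[X in X <= _]addn0.
  by apply: leq_add => //; apply: leq_sum => k; rewrite inE.
case: q tq HE => [|q'] tq HE.
  by have := leq_trans (ltn_ord x0) tq.
pose io (k : T) : 'I_q'.+1 := inord (index k S).
pose ka (m : 'I_q'.+1) : T := nth i S m.
have idxS k : k \in S -> index k S < size S by rewrite index_mem.
have kaio k : k \in S -> ka (io k) = k.
  move=> kS; rewrite /ka /io inordK ?nth_index //.
  by apply: (leq_trans (idxS k kS)); apply: (leq_trans sizeS).
have ioka (m : 'I_q'.+1) : m < size S -> io (ka m) = m.
  by move=> mS; apply: val_inj; rewrite /io /ka /= index_uniq // inordK ?ltn_ord.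
have c1S x : c1 x \in S by rewrite inS cnt_in.
have c2S x : c2 x \in S.
  rewrite inS lt0n; apply/negP => /eqP /B.
  by move/eqP; apply/negP; rewrite -lt0n cnt_in.
have ioS k : k \in S -> io k < size S.
  by move=> kS; rewrite /io inordK ?idxS //; apply: (leq_trans (idxS k kS)); apply: (leq_trans sizeS).
have ioinj k k' : k \in S -> k' \in S -> io k = io k' -> k = k'.
  by move=> kS k'S E; rewrite -(kaio k kS) E kaio.
pose d1 x := io (c1 x); pose d2 x := io (c2 x).
have cntd (c : 'I_t -> T) : (forall x, c x \in S) ->
    forall k, k \in S -> cntf (fun x => io (c x)) (io k) = cntf c k.
  move=> cS k kS; apply: eq_card => x; rewrite !inE.
  by apply/eqP/eqP => [/ioinj -> //|->].
have cntd0 (c : 'I_t -> T) : (forall x, c x \in S) ->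
    forall m : 'I_q'.+1, size S <= m -> cntf (fun x => io (c x)) m = 0.
  move=> cS m mS; apply: eq_card0 => x; rewrite !inE; apply/eqP => E.
  by move: (ioS _ (cS x)); rewrite E ltnNge mS.
have pd1 : properc d1 by move=> x y exy /ioinj E; apply: (pc1 x y exy); apply: E.
have pd2 : properc d2 by move=> x y exy /ioinj E; apply: (pc2 x y exy); apply: E.
have iS : i \in S by rewrite inS (leq_ltn_trans (leq0n _) Hi).
have Hi' : cntf d2 (io i) < cntf d1 (io i) by rewrite /d1 /d2 !cntd.
have [j' [Hj' [d3 [pd3 [d3i [d3j d3k]]]]]] := HE d1 d2 pd1 pd2 (io i) Hi'.
have j'S : j' < size S.
  rewrite ltnNge; apply/negP => /(cntd0 c2 c2S) E.
  by move: Hj'; rewrite /d2 E.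
pose j := ka j'.
have jS : j \in S by rewrite mem_nth.
have ioj : io j = j' by rewrite /j ioka.
exists j; split; first by move: Hj'; rewrite -ioj /d1 /d2 !cntd.
have ij : io i != j' by apply/eqP => E; move: Hj'; rewrite -E ltnNge ltnW.
have d3S x : d3 x < size S.
  rewrite ltnNge; apply/negP => Sd.
  have := cnt_in d3 x.
  have d3i' : d3 x != io i by apply/eqP => E; move: Sd; rewrite E leqNgt ioS.
  have d3j' : d3 x != j' by apply/eqP => E; move: Sd; rewrite E leqNgt j'S.
  by rewrite (d3k _ d3i' d3j') /d1 (cntd0 c1 c1S).
exists (fun x => ka (d3 x)); split.
  by move=> x y exy E; apply: (pd3 x y exy); rewrite -(ioka _ (d3S x)) E ioka.
have cnt3 k : k \in S -> cntf (fun x => ka (d3 x)) k = cntf d3 (io k).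
  move=> kS; apply: eq_card => x; rewrite !inE.
  apply/eqP/eqP => [<-|->]; [by rewrite ioka | by rewrite kaio].
split; first by rewrite cnt3 // d3i /d1 cntd.
split; first by rewrite cnt3 // ioj d3j -ioj /d1 cntd.
move=> k ki kj.
have [kS|kS] := boolP (k \in S).
  rewrite cnt3 // d3k /d1 ?cntd //.
    by apply: contra ki => /eqP /ioinj ->.
  by rewrite -ioj; apply: contra kj => /eqP /ioinj ->.
have -> : cntf c1 k = 0 by apply/eqP; rewrite -leqn0 leqNgt -inS.
apply: eq_card0 => x; rewrite !inE; apply/eqP => E.
by move: kS; rewrite -E mem_nth.
Qed.
End L1.


Section Comb.
Variables (t n : nat) (e : rel 'I_t) (A : rel 'I_n).
Hypotheses (esym : ssrbool.symmetric e) (eirr : irreflexive e) (enb : forall x, exists y, e x y).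
Hypotheses (Asym : ssrbool.symmetric A) (AK : forall v z u w, A v z -> A u w -> A v u \/ A v w).

Definition hom (phi : 'I_t -> 'I_n) := forall x y, e x y -> A (phi x) (phi y).
Definition nonisol v := [exists z, A v z].
Definition rep v := odflt v [pick w | nonisol w && ~~ A w w && ~~ A v w].

Lemma S1 l u : A l l -> nonisol u -> A l u.
Proof.
move=> All /existsP [z Auz].
by case: (AK Auz All) => H; rewrite Asym.
Qed.

Lemma S2 v w x : nonisol w -> ~~ A v w -> ~~ A w x -> ~~ A v x.
Proof.
move=> /existsP [z Awz] nvw nwx; apply/negP => Avx.
case: (AK Awz Avx) => H; [by move: nvw; rewrite Asym H | by move: nwx; rewrite H].
Qed.

Lemma hom_nonisol phi : hom phi -> forall x, nonisol (phi x).
Proof. by move=> h x; have [y exy] := enb x; apply/existsP; exists (phi y); apply: h. Qed.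

Lemma cnt_nonisol phi v : hom phi -> 0 < cntf phi v -> nonisol v.
Proof. by move=> h /cnt_gt0 [x <-]; apply: hom_nonisol. Qed.

Lemma rep_spec v : nonisol v -> ~~ A v v ->
  [/\ nonisol (rep v), ~~ A (rep v) (rep v) & ~~ A v (rep v)].
Proof.
move=> nv lv; rewrite /rep; case: pickP => [w /andP [/andP [nw lw] vw]|none] //=.
Qed.

Lemma rep_eq v v' : nonisol v -> nonisol v' -> ~~ A v' v' -> ~~ A v v' -> rep v = rep v'.
Proof.
move=> nv nv' lv' vv'.
have v'v : ~~ A v' v by rewrite Asym.
have E : (fun w => nonisol w && ~~ A w w && ~~ A v w) =1
         (fun w => nonisol w && ~~ A w w && ~~ A v' w).
  move=> w /=; case: (nonisol w && ~~ A w w) => //=.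
  by apply/idP/idP => H; [exact: (S2 nv v'v H) | exact: (S2 nv' vv' H)].
rewrite /rep (eq_pick E); case: pickP => // none.
by move: (none v'); rewrite nv' lv'.
Qed.

Lemma rep_neq_adj v v' : nonisol v -> ~~ A v v -> rep v = rep v' -> nonisol v' -> ~~ A v' v' ->
  ~~ A v v'.
Proof.
move=> nv lv E nv' lv'.
have [nw lw vw] := rep_spec nv lv.
have [_ _ v'w] := rep_spec nv' lv'.
rewrite -E in v'w.
by apply: (S2 nw vw); rewrite Asym.
Qed.

Lemma adj_of_rep u v : nonisol u -> nonisol v ->
  (~~ A u u -> ~~ A v v -> rep u != rep v) -> A u v.
Proof.
move=> nu nv H.
have [Auu|lu] := boolP (A u u); first exact: S1.
have [Avv|lv] := boolP (A v v); first by rewrite Asym; apply: S1.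
apply: contraNT (H lu lv) => nuv; apply/eqP; exact: rep_eq.
Qed.

Definition kap (tau : 'I_t -> 'I_t) (phi : 'I_t -> 'I_n) (x : 'I_t) : 'I_n + 'I_t :=
  if A (phi x) (phi x) then inr (tau x) else inl (rep (phi x)).

Lemma kap_proper phi tau : hom phi ->
  (forall x y, A (phi x) (phi x) -> A (phi y) (phi y) -> tau x = tau y -> x = y) ->
  properc e (kap tau phi).
Proof.
move=> h tinj x y exy; have Axy := h x y exy; rewrite /kap.
case: ifP => Ax; case: ifP => Ay // [].
  by move=> /(tinj _ _ Ax Ay) xy; move: exy; rewrite xy eirr.
move=> E; move: Axy; apply/negP.
apply: rep_neq_adj E _ _; rewrite ?Ax ?Ay //; exact: hom_nonisol.
Qed.

Lemma rebuild (gam : 'I_t -> 'I_n + 'I_t) chi tau (p : 'S_t) : properc e gam ->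
  (forall x, nonisol (chi x)) -> (forall x, gam (p x) = kap tau chi x) ->
  hom (fun u => chi ((p^-1)%g u)).
Proof.
move=> pg nchi E u v euv.
have := pg u v euv; rewrite -{1}(permKV p u) -{1}(permKV p v) !E.
set x := (p^-1)%g u; set y := (p^-1)%g v => kxy.
apply: adj_of_rep => // lx ly; apply/eqP => E'; apply: kxy.
by rewrite /kap (negbTE lx) (negbTE ly) E'.
Qed.

Lemma move_looped phi x0 j : hom phi -> A j j -> hom (updf phi x0 j).
Proof.
move=> h Ajj x y exy; rewrite /updf.
case: eqP => _; case: eqP => _ //.
- by apply: S1 => //; apply: hom_nonisol.
- by rewrite Asym; apply: S1 => //; apply: hom_nonisol.
- exact: h.
Qed.

Lemma swap_cls i j w : nonisol j -> ~~ A i j -> A i w -> A j w.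
Proof. by move=> nj ij iw; apply: contraLR iw; apply: S2. Qed.

Lemma move_class phi x0 j : hom phi -> nonisol j -> ~~ A (phi x0) j -> hom (updf phi x0 j).
Proof.
move=> h nj ij x y exy; rewrite /updf.
case: eqP => xx0; case: eqP => yx0.
- by move: exy; rewrite xx0 yx0 eirr.
- by apply: (swap_cls nj ij); rewrite -xx0; apply: h.
- by rewrite Asym; apply: (swap_cls nj ij); rewrite -yx0 Asym; apply: h.
- exact: h.
Qed.

Lemma cnt_kap_inl tau phi r :
  cntf (kap tau phi) (inl r) = \sum_(v | ~~ A v v && (rep v == r)) cntf phi v.
Proof.
rewrite -card_comp_sum; apply: eq_card => x; rewrite !inE /kap.
by case: ifP.
Qed.

Lemma cnt_kap_inr tau phi z :
  cntf (kap tau phi) (inr z) = #|[pred y | A (phi y) (phi y) && (tau y == z)]|.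
Proof. by apply: eq_card => x; rewrite !inE /kap; case: ifP. Qed.

Lemma cnt_kap_inr_id phi z : cntf (kap id phi) (inr z) = A (phi z) (phi z).
Proof.
rewrite cnt_kap_inr.
have [Az|nAz] := boolP (A (phi z) (phi z)).
  apply: (@eq_trans _ _ #|pred1 z|); last by rewrite card1.
  apply: eq_card => y; rewrite !inE.
  by case: (eqVneq y z) => [->|]; rewrite ?Az ?andbF.
apply: eq_card0 => y; rewrite !inE.
by case: (eqVneq y z) => [->|]; rewrite ?(negbTE nAz) ?andbF.
Qed.

Lemma sum_lt (P : pred 'I_n) (f g : 'I_n -> nat) i :
  P i -> f i < g i -> (forall v, P v -> f v <= g v) ->
  \sum_(v | P v) f v < \sum_(v | P v) g v.
Proof.
move=> Pi fgi fg; rewrite (bigD1 i) // [X in _ < X](bigD1 i) //=.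
by rewrite -addSn leq_add // leq_sum // => v /andP [Pv _]; apply: fg.
Qed.

Lemma sum_lt_ex (P : pred 'I_n) (f g : 'I_n -> nat) :
  \sum_(v | P v) f v < \sum_(v | P v) g v -> exists v, P v /\ f v < g v.
Proof.
move=> H; case: (pickP (fun v => P v && (f v < g v))) => [v /andP [Pv fv]|none].
  by exists v.
move: H; rewrite ltnNge => /negP []; apply: leq_sum => v Pv.
by have := none v; rewrite /= Pv /= ltnNge => /negbFE.
Qed.

Hypothesis HE : MconvCol e ('I_n + 'I_t)%type.

Theorem comb_main phi psi : hom phi -> hom psi -> forall i, cntf psi i < cntf phi i ->
  exists j, cntf phi j < cntf psi j /\ exists phi', hom phi' /\
    cntf phi' i = (cntf phi i).-1 /\ cntf phi' j = (cntf phi j).+1 /\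
    forall k, k != i -> k != j -> cntf phi' k = cntf phi k.
Proof.
move=> hphi hpsi i Hi.
have [x0 px0] := cnt_gt0 (leq_ltn_trans (leq0n _) Hi).
have inon : nonisol i by rewrite -px0; apply: hom_nonisol.
have fin j chi : cntf phi j < cntf psi j -> hom chi ->
    (forall k, cntf chi k = cntf (updf phi x0 j) k) ->
  exists j, cntf phi j < cntf psi j /\ exists phi', hom phi' /\
    cntf phi' i = (cntf phi i).-1 /\ cntf phi' j = (cntf phi j).+1 /\
    forall k, k != i -> k != j -> cntf phi' k = cntf phi k.
  move=> Dj hchi cchi.
  have ij : i != j by apply/eqP => ij; move: Hi; rewrite ij ltnNge ltnW.
  exists j; split => //; exists chi; split => //.
  have U k := cnt_upd phi x0 j k; rewrite px0 in U.
  split; first by have := U i; rewrite cchi eqxx eq_sym (negbTE ij) addn0 addn1 => <-.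
  split; first by have := U j; rewrite cchi eqxx (negbTE ij) addn0 addn1.
  by move=> k ki kj; have := U k; rewrite cchi eq_sym (negbTE ki) eq_sym (negbTE kj) !addn0.
have Dnon j : cntf phi j < cntf psi j -> nonisol j.
  by move=> Dj; apply: (cnt_nonisol hpsi); apply: leq_ltn_trans Dj.
have [/existsP [j /andP [Dj Ajj]]|nc1] := boolP [exists j, (cntf phi j < cntf psi j) && A j j].
  by apply: (fin j (updf phi x0 j)) => //; apply: move_looped.
have [/andP [lii /existsP [j /andP [Dj nij]]]|nc2] :=
  boolP (~~ A i i && [exists j, (cntf phi j < cntf psi j) && ~~ A i j]).
  apply: (fin j (updf phi x0 j)) => //; apply: move_class => //; first exact: Dnon.
  by rewrite px0.
have N1 j : cntf phi j < cntf psi j -> ~~ A j j.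
  by move=> Dj; apply/negP => Ajj; move/negP: nc1; apply; apply/existsP; exists j; rewrite Dj.
have N2 j : ~~ A i i -> cntf phi j < cntf psi j -> A i j.
  move=> lii Dj; apply/negPn/negP => nij; move/negP: nc2; apply.
  by rewrite lii; apply/existsP; exists j; rewrite Dj.
pose Sphi := [set x | A (phi x) (phi x)].
pose Spsi := [set x | A (psi x) (psi x)].
have cardS : #|Spsi| + A i i <= #|Sphi|.
  have cE (h : 'I_t -> 'I_n) : #|[set x | A (h x) (h x)]| = \sum_(v | A v v) cntf h v.
    by rewrite -(card_comp_sum h (fun v => A v v)); apply: eq_card => x; rewrite !inE.
  rewrite !cE.
  have le v : A v v -> cntf psi v <= cntf phi v.
    by move=> Avv; rewrite leqNgt; apply/negP => /N1; rewrite Avv.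
  case: (boolP (A i i)) => Aii /=.
    by rewrite addn1; apply: (sum_lt (i := i)).
  by rewrite addn0; apply: leq_sum.
pose S' := if A i i then Sphi :\ x0 else Sphi.
have cardS' : #|Spsi| <= #|S'|.
  rewrite /S'; case: (boolP (A i i)) => Aii; last by move: cardS; rewrite (negbTE Aii) addn0.
  have x0S : x0 \in Sphi by rewrite inE px0.
  by move: cardS; rewrite Aii (cardsD1 x0 Sphi) x0S addn1 add1n ltnS.
have [tau [tinj tS]] := inj_into cardS'.
pose al := kap id phi; pose be := kap tau psi.
have pal : properc e al by apply: kap_proper.
have pbe : properc e be.
  apply: kap_proper => // x y Ax Ay; apply: tinj; rewrite inE //.
pose istar := if A i i then inr x0 else inl (rep i) : 'I_n + 'I_t.
have alx0 : al x0 = istar by rewrite /al /kap px0 /istar; case: ifP.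
have Hstar : cntf be istar < cntf al istar.
  rewrite /istar; case: (boolP (A i i)) => Aii.
    rewrite cnt_kap_inr_id px0 Aii cnt_kap_inr ltnS leqn0; apply/eqP/eq_card0 => y.
    rewrite !inE; apply/negP => /andP [Ay /eqP ty].
    have := tS y; rewrite inE => /(_ Ay); rewrite /S' Aii ty.
    by rewrite !inE eqxx.
  rewrite !cnt_kap_inl; apply: (sum_lt (i := i)); first by rewrite Aii eqxx.
    by [].
  move=> v /andP [lv /eqP rv]; rewrite leqNgt; apply/negP => Dv.
  have := N2 v Aii Dv; apply/negP.
  by apply: (rep_neq_adj inon Aii); [rewrite rv | exact: Dnon | exact: lv].
have [jstar [Hj [gam [pgam [gi [gj gk]]]]]] := HE pal pbe Hstar.
have neq_star : istar != jstar.
  by apply/eqP => E; move: Hj; rewrite -E ltnNge ltnW.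
case: jstar Hj gj gk neq_star => [r'|z] Hj gj gk neq_star; last first.
  exfalso.
  have [y /eqP] := cnt_gt0 (leq_ltn_trans (leq0n _) Hj).
  rewrite /be /kap; case: ifP => // Ay /eqP [tyz].
  have zS : z \in Sphi.
    have := tS y; rewrite inE => /(_ Ay); rewrite -tyz /S'.
    by case: ifP => _ //; rewrite inE => /andP [].
  rewrite inE in zS; move: Hj; rewrite cnt_kap_inr_id zS cnt_kap_inr ltnNge => /negP; apply.
  apply: (leq_trans (subset_leq_card (B := pred1 y) _)); last by rewrite card1.
  apply/subsetP => y' /andP [Ay' /eqP ty']; rewrite inE; apply/eqP.
  by apply: tinj; rewrite ?inE // ty'.
move: Hj; rewrite !cnt_kap_inl => /sum_lt_ex [j [/andP [lj /eqP rj] Dj]].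
pose chi := updf phi x0 j.
have kapchi x : kap id chi x = updf al x0 (inl r') x.
  rewrite /kap /chi /updf /al /kap; case: eqP => _ //.
  by rewrite (negbTE lj) rj.
have U k' : cntf (updf al x0 (inl r')) k' + (istar == k') = cntf al k' + (inl r' == k').
  by rewrite -alx0 cnt_upd.
have cnts k : cntf (kap id chi) k = cntf gam k.
  have -> : cntf (kap id chi) k = cntf (updf al x0 (inl r')) k.
    by apply: eq_card => x; rewrite !inE kapchi.
  have [->|ks] := eqVneq k istar.
    rewrite gi; have := U istar; rewrite eqxx eq_sym (negbTE neq_star) addn0 addn1.
    by move=> <-.
  have [->|kr] := eqVneq k (inl r').
    by rewrite gj; have := U (inl r'); rewrite eqxx (negbTE neq_star) addn0 addn1.
  by rewrite gk //; have := U k; rewrite eq_sym (negbTE ks) eq_sym (negbTE kr) !addn0.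
have [p Hp] := perm_of_counts cnts.
apply: (fin j (fun u => chi ((p^-1)%g u))) => //.
  apply: (rebuild pgam (tau := id)) => // x.
  rewrite /chi /updf; case: eqP => _; first exact: Dnon.
  exact: hom_nonisol.
by move=> k; rewrite cnt_perm.
Qed.

End Comb.

Local Open Scope ring_scope.

Lemma count_enumE (T : finType) (p : pred T) : count p (enum T) = #|p|.
Proof. by rewrite cardE -size_filter /enum_mem filter_predT. Qed.

Section LA.
Variable C : numClosedFieldType.
Local Open Scope sesquilinear_scope.
Local Open Scope ring_scope.

Lemma char_poly_similar n (P D : 'M[C]_n) : P \in unitmx ->
  char_poly (invmx P *m D *m P) = char_poly D.
Proof.
move=> Pu; rewrite /char_poly /char_poly_mx.
set Pp := map_mx polyC P; set Pi := map_mx polyC (invmx P).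
have PiPp : Pi *m Pp = 1%:M by rewrite -map_mxM mulVmx // map_mx1.
have -> : map_mx polyC (invmx P *m D *m P) = Pi *m map_mx polyC D *m Pp.
  by rewrite !map_mxM.
have Xe : ('X%:M : 'M[{poly C}]_n) = Pi *m 'X%:M *m Pp.
  by rewrite -mulmxA -scalar_mxC mulmxA PiPp mul1mx.
rewrite {1}Xe -mulmxBl -mulmxBr !det_mulmx mulrAC -det_mulmx PiPp det1 mul1r.
done.
Qed.

Lemma LA_core n (G : 'M[C]_n) (s : seq C) :
  G \is hermsymmx -> all (fun x => x \is Num.real) s ->
  char_poly G = \prod_(x <- s) ('X - x%:P) -> (count (fun x : C => (0 < x)%R) s <= 1)%N ->
  forall u w : 'rV[C]_n,
  0 < (u *m G *m u^t*) 0 0 -> 0 < (w *m G *m w^t*) 0 0 ->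
  (u *m G *m w^t*) 0 0 = 0 -> (w *m G *m u^t*) 0 0 = 0 -> False.
Proof.
move=> Gh sreal cpG cnt u w Fuu Fww Fuw Fwu.
pose P := spectralmx G; pose d := spectral_diag G.
have Pu : P \is unitarymx := spectral_unitarymx G.
have GE0 : G = invmx P *m diag_mx d *m P.
  exact/orthomx_spectralP/hermitian_normalmx.
have GE : G = P^t* *m diag_mx d *m P by rewrite {1}GE0 invmx_unitary.
have cpd : char_poly G = \prod_(i < n) ('X - (d 0 i)%:P).
  rewrite GE0 char_poly_similar ?spectral_unit // char_poly_trig ?diag_mx_is_trig //.
  by apply: eq_bigr => i _; rewrite mxE eqxx mulr1n.
have pe : perm_eq s [seq d 0 i | i <- enum 'I_n].
  by apply: prod_XsubC_eq; rewrite -cpG cpd big_map big_enum.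
have dreal k : d 0 k \is Num.real.
  apply: (allP sreal); rewrite (seq.perm_mem pe); apply: map_f; exact: mem_enum.
have cnt' : (#|[pred k : 'I_n | (0 < d 0 k)%R]| <= 1)%N.
  by rewrite -count_enumE -(count_map (fun k => d 0 k) (fun x => 0 < x)) -(seq.permP pe).
have Fform (a b : 'rV[C]_n) : (a *m G *m b^t*) 0 0 =
    \sum_k (a *m P^t*) 0 k * d 0 k * ((b *m P^t*) 0 k)^*.
  rewrite GE !mulmxA -[a *m P^t* *m diag_mx d *m P *m b^t*]mulmxA.
  have -> : P *m b^t* = (b *m P^t*)^t*.
    apply/matrixP => i j; rewrite !mxE rmorph_sum; apply: eq_bigr => k _.
    by rewrite !mxE rmorphM /= conjCK mulrC.
  rewrite mxE; apply: eq_bigr => k _.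
  by rewrite mul_mx_diag !mxE.
pose q (Z : 'rV[C]_n) := \sum_k Z 0 k * d 0 k * (Z 0 k)^*.
have qle0 (Z : 'rV[C]_n) : (forall k, Z 0 k = 0 \/ d 0 k <= 0) -> q Z <= 0.
  move=> H; apply: sumr_le0 => k _.
  case: (H k) => [->|dk]; first by rewrite !mul0r lexx.
  by rewrite -mulrA mulrCA mulr_le0_ge0 // mul_conjC_ge0.
pose X := u *m P^t*; pose W := w *m P^t*.
have qX : q X = (u *m G *m u^t*) 0 0 by rewrite Fform.
have [k0 dk0|nopos] := pickP (fun k => 0 < d 0 k); last first.
  have : q X <= 0.
    by apply: qle0 => k; right; rewrite real_leNgt ?real0 // nopos.
  by rewrite qX => /(lt_le_trans Fuu); rewrite ltxx.
have others k : k != k0 -> d 0 k <= 0.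
  move=> kk0; rewrite real_leNgt ?real0 //; apply/negP => dk.
  have : (#|[pred k : 'I_n | (0 < d 0 k)%R]| >= 2)%N.
    have <- : #|[set k; k0]| = 2%N by rewrite cards2 kk0.
    by apply: subset_leq_card; apply/subsetP => x; rewrite !inE => /orP[]/eqP->.
  by rewrite leqNgt ltnS cnt'.
pose X0 := X 0 k0; pose W0 := W 0 k0.
have X0nz : X0 != 0.
  apply/negP => /eqP X0z.
  have : q X <= 0.
    apply: qle0 => k; have [->|kk0] := eqVneq k k0; [by left | by right; apply: others].
  by rewrite qX => /(lt_le_trans Fuu); rewrite ltxx.
pose Z : 'rV[C]_n := \row_k (W0 * X 0 k - X0 * W 0 k).
have qZle : q Z <= 0.
  apply: qle0 => k; have [->|kk0] := eqVneq k k0; last by right; apply: others.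
  by left; rewrite mxE /X0 /W0 mulrC subrr.
have Zk k : Z 0 k = W0 * X 0 k - X0 * W 0 k by rewrite mxE.
have qZE : q Z = W0 * W0^* * (u *m G *m u^t*) 0 0 - W0 * X0^* * (u *m G *m w^t*) 0 0
   - X0 * W0^* * (w *m G *m u^t*) 0 0 + X0 * X0^* * (w *m G *m w^t*) 0 0.
  rewrite !Fform -/X -/W /q !mulr_sumr -!sumrB -!big_split /=.
  apply: eq_bigr => k _; rewrite Zk !rmorphB !rmorphM /=.
  ring.
rewrite Fuw Fwu !mulr0 !subr0 in qZE.
have pos : 0 < q Z.
rewrite qZE; apply: ltr_wpDl; first by rewrite mulr_ge0 ?mul_conjC_ge0 // ltW.
  by rewrite mulr_gt0 // mul_conjC_gt0.
by have := lt_le_trans pos qZle; rewrite ltxx.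
Qed.
End LA.

Section RealCore.
Local Open Scope sesquilinear_scope.
Local Open Scope ring_scope.

Local Notation f := (real_complex Real).

Lemma real_core n (G : 'M[Real]_n) : weighted_graph G -> antiferromagnetic G ->
  forall x y : 'rV[Real]_n, 0 < (x *m G *m x^T) 0 0 -> 0 < (y *m G *m y^T) 0 0 ->
  (x *m G *m y^T) 0 0 = 0 -> False.
Proof.
move=> [Gsym Gnn] [s [cpG cnt]] x y Qx Qy Bxy.
pose Gc := map_mx f G.
have fconj (r : Real) : (f r)^* = f r.
  by apply: conj_Creal; apply/complex_realP; exists r.
have mapT m (z : 'M[Real]_(m, n)) : (map_mx f z)^t* = map_mx f z^T.
  by apply/matrixP => i j; rewrite !mxE fconj.
have Fm (a b : 'rV[Real]_n) : (map_mx f a *m Gc *m (map_mx f b)^t*) 0 0 = f ((a *m G *m b^T) 0 0).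
  by rewrite mapT -!map_mxM mxE.
have Byx : (y *m G *m x^T) 0 0 = 0.
  have -> : y *m G *m x^T = (x *m G *m y^T)^T by rewrite !trmx_mul trmxK Gsym mulmxA.
  by rewrite mxE.
apply: (@LA_core _ n Gc (map f s) _ _ _ _ (map_mx f x) (map_mx f y)).
- apply/is_hermitianmxP; rewrite expr0 scale1r; apply/matrixP => i j.
  by rewrite !mxE fconj -[in LHS]Gsym mxE.
- by apply/allP => z /mapP [r _ ->]; apply/complex_realP; exists r.
- by rewrite -map_char_poly cpG map_prod_XsubC big_map.
- rewrite count_map; apply: leq_trans cnt; apply: sub_count => r /=.
  by rewrite -(rmorph0 f) ltcR.
- by rewrite Fm -(rmorph0 f) ltcR.
- by rewrite Fm -(rmorph0 f) ltcR.
- by rewrite Fm Bxy rmorph0.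
- by rewrite Fm Byx rmorph0.
Qed.

End RealCore.

Local Open Scope ring_scope.

Section Bil.
Variables (n : nat) (G : 'M[Real]_n).
Definition Bf (x y : 'rV[Real]_n) := (x *m G *m y^T) 0 0.
Lemma BDl x1 x2 y : Bf (x1 + x2) y = Bf x1 y + Bf x2 y.
Proof. by rewrite /Bf !mulmxDl mxE. Qed.
Lemma BZl k x y : Bf (k *: x) y = k * Bf x y.
Proof. by rewrite /Bf -!scalemxAl mxE. Qed.
Lemma BDr x y1 y2 : Bf x (y1 + y2) = Bf x y1 + Bf x y2.
Proof. by rewrite /Bf linearD /= mulmxDr mxE. Qed.
Lemma BZr k x y : Bf x (k *: y) = k * Bf x y.
Proof. by rewrite /Bf linearZ /= -scalemxAr mxE. Qed.
Lemma Be a b : Bf (delta_mx 0 a) (delta_mx 0 b) = G a b.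
Proof.
rewrite /Bf trmx_delta mxE (bigD1 b) //= big1 ?addr0.
  rewrite mxE (bigD1 a) //= big1 ?addr0.
    by rewrite !mxE !eqxx /= mul1r mulr1.
  by move=> i ia; rewrite !mxE (negbTE ia) /= mul0r.
by move=> i ib; rewrite [delta_mx b 0 i 0]mxE (negbTE ib) /= mulr0.
Qed.
End Bil.

Lemma Bsym n (G : 'M[Real]_n) : G^T = G -> forall x y, Bf G x y = Bf G y x.
Proof.
move=> Gsym x y; rewrite /Bf.
have -> : y *m G *m x^T = (x *m G *m y^T)^T by rewrite !trmx_mul trmxK Gsym mulmxA.
by rewrite [RHS]mxE.
Qed.

Lemma two_vec n (G : 'M[Real]_n) : weighted_graph G -> antiferromagnetic G ->
  forall a b c, Bf G a b = 0 -> 0 < Bf G a c -> 0 <= Bf G a a -> 0 <= Bf G c c ->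
  0 <= Bf G c b -> 0 < Bf G b b -> False.
Proof.
move=> wG aG a b c Bab Pac Baa Bcc Bcb Bbb.
have Bs := Bsym (proj1 wG).
set Cb := Bf G c b; set P := Bf G a c; set Q1 := Bf G b b.
pose eps := P * Q1 / (Cb ^+ 2 + 1).
have den_gt0 : 0 < Cb ^+ 2 + 1 by rewrite ltr_wpDl ?sqr_ge0.
have eps_gt0 : 0 < eps by rewrite /eps divr_gt0 // mulr_gt0.
have epsE : eps * (Cb ^+ 2 + 1) = P * Q1 by rewrite /eps divfK // gt_eqF.
pose x := a + eps *: c.
have QxE : Bf G x x = Bf G a a + 2 * eps * P + eps ^+ 2 * Bf G c c.
  rewrite /x !(BDl, BDr, BZl, BZr) (Bs c a) -/P; ring.
have Bxb : Bf G x b = eps * Cb by rewrite /x !(BDl, BZl) Bab add0r.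
clearbody x.
pose Qx := Bf G x x.
have Qx_ge : 2 * eps * P <= Qx.
  have := mulr_ge0 (sqr_ge0 eps) Bcc; rewrite /Qx QxE; lra.
pose y := Qx *: b + (- (eps * Cb)) *: x.
have Bxy : Bf G x y = 0 by rewrite /y !(BDr, BZr) Bxb -/Qx; ring.
have Qy : Bf G y y = Qx * (Qx * Q1 - eps ^+ 2 * Cb ^+ 2).
  by rewrite /y !(BDl, BDr, BZl, BZr) (Bs b x) Bxb -/Qx -/Q1; ring.
have h0 : 0 < eps * P by rewrite mulr_gt0.
have Qx_gt0 : 0 < Qx by apply: lt_le_trans Qx_ge; lra.
have h1 : 2 * eps * P * Q1 <= Qx * Q1 by rewrite ler_pM2r.
have h2 : eps ^+ 2 * Cb ^+ 2 = eps * (P * Q1 - eps) by rewrite -epsE; ring.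
have h3 : 0 < eps * P * Q1 by rewrite mulr_gt0.
apply: (real_core wG aG (x := x) (y := y)).
- exact: Qx_gt0.
- rewrite -/(Bf G y y) Qy mulr_gt0 // h2 subr_gt0.
  apply: lt_le_trans h1; nra.
- exact: Bxy.
Qed.

Lemma Kprop n (G : 'M[Real]_n) : weighted_graph G -> antiferromagnetic G ->
  forall v z u w : 'I_n, 0 < G v z -> 0 < G u w -> 0 < G v u \/ 0 < G v w.
Proof.
move=> wG aG v z u w Gvz Guw.
have [[Gsym Gnn] Bs] := (wG, Bsym (proj1 wG)).
have [|Hvu] := boolP (0 < G v u); first by left.
have [|Hvw] := boolP (0 < G v w); first by right.
exfalso.
have z0 (r : Real) : 0 <= r -> ~~ (0 < r) -> r = 0.
  by move=> r0 /negP rp; apply/eqP; rewrite eq_le r0 andbT leNgt; apply/negP.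
have Gvu0 := z0 _ (Gnn v u) Hvu; have Gvw0 := z0 _ (Gnn v w) Hvw.
pose ev k : 'rV[Real]_n := delta_mx 0 k.
pose b := ev u + ev w.
have Bab : Bf G (ev v) b = 0 by rewrite /b BDr !Be Gvu0 Gvw0 addr0.
have Gwu : G w u = G u w by rewrite -[in LHS]Gsym mxE.
have Bbb : 0 < Bf G b b.
  rewrite /b !(BDl, BDr) !Be Gwu.
  have := Gnn u u; have := Gnn w w; lra.
have [zv|zv] := eqVneq z v.
  apply: (real_core wG aG (x := ev v) (y := b)) => //.
  by rewrite -/(Bf G _ _) Be -{2}zv.
apply: (two_vec wG aG (a := ev v) (b := b) (c := ev z)) => //.
- by rewrite Be.
- by rewrite Be.
- by rewrite Be.
- by rewrite /b BDr !Be addr_ge0.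
Qed.

Local Open Scope ring_scope.

Definition mono (t n : nat) (phi : 'I_t -> 'I_n) : 'X_{1..n} := (\sum_(x : 'I_t) U_(phi x))%MM.

Lemma monoE t n (phi : 'I_t -> 'I_n) v : mono phi v = cntf phi v.
Proof.
rewrite /mono mnm_sumE /cntf -sum1_card [RHS]big_mkcond /=.
by apply: eq_bigr => x _; rewrite mnm1E inE; case: (phi x == v).
Qed.

Lemma prodX t n (phi : 'I_t -> 'I_n) :
  \prod_(v : 'I_t) ('X_(phi v) : {mpoly Real[n]}) = 'X_[mono phi].
Proof.
rewrite /mono; elim/big_rec2: _ => [|x m p _ ->]; first by rewrite mpolyX0.
by rewrite mpolyXD.
Qed.

Definition wt t (e : rel 'I_t) n (G : 'M[Real]_n) (phi : {ffun 'I_t -> 'I_n}) : Real :=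
  \prod_(p : 'I_t * 'I_t | ((p.1 < p.2)%N && e p.1 p.2)) G (phi p.1) (phi p.2).

Lemma hsupp_char t (e : rel 'I_t) n (G : 'M[Real]_n) (m : 'X_{1..n}) :
  (forall i j, 0 <= G i j) ->
  hsupport (chromatic_fun e G) m <->
  exists phi : {ffun 'I_t -> 'I_n},
    (forall p : 'I_t * 'I_t, (p.1 < p.2)%N && e p.1 p.2 -> 0 < G (phi p.1) (phi p.2)) /\
    forall v, m v = cntf phi v.
Proof.
move=> Gnn.
have wnn phi : 0 <= wt e G phi by apply: prodr_ge0 => p _; apply: Gnn.
have coefE : (chromatic_fun e G)@_m = \sum_phi wt e G phi * (mono phi == m)%:R.
  rewrite /chromatic_fun raddf_sum; apply: eq_bigr => phi _.
  by rewrite /= prodX mul_mpolyC mcoeffZ mcoeffX.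
rewrite /hsupport mcoeff_msupp coefE psumr_eq0; last first.
  by move=> phi _; rewrite mulr_ge0 ?ler0n.
split.
  move/allPn => [phi _ /=]; rewrite mulf_eq0 negb_or => /andP [wnz mnz].
  exists phi; split.
    move=> p Pp; rewrite lt_def Gnn andbT.
    move: wnz; rewrite /wt prodf_seq_neq0 => /allP /(_ p (mem_index_enum _)).
    by rewrite Pp.
  move=> v; rewrite -monoE; move: mnz; rewrite pnatr_eq0 eqb0 negbK => /eqP ->.
  done.
move=> [phi [pos cnt]]; apply/allPn; exists phi; first exact: mem_index_enum.
rewrite /= mulf_eq0 negb_or; apply/andP; split.
  rewrite /wt prodf_seq_neq0; apply/allP => p _; apply/implyP => Pp.
  by rewrite gt_eqF // pos.
suff -> : mono phi = m by rewrite eqxx oner_eq0.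
by apply/mnmP => v; rewrite monoE cnt.
Qed.

Local Open Scope ring_scope.

Unset Implicit Arguments.

Theorem proposition3p3 (t : nat) (e : rel 'I_t) :
  (2 <= t)%N -> simple_graph e -> connected_graph e ->
  (exists q : nat, (t <= q)%N /\ M_convex (hsupport (chromatic_fun e (Kq q)))) ->
  forall (n : nat) (G : 'M[Real]_n), weighted_graph G -> antiferromagnetic G ->
    M_convex (hsupport (chromatic_fun e G)).
Proof.
move=> Ht [esym eirr'] conn [q [tq Hq]] n G wG aG.
have eirr : irreflexive e := fun x => negbTE (eirr' x).
have enb : forall x, exists y, e x y.
  move=> x.
  have t0 : (0 < t)%N by apply: leq_trans Ht.
  have [y yx] : exists y : 'I_t, y != x.
    have [x0|xn0] := eqVneq (nat_of_ord x) 0%N.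
      by exists (Ordinal Ht); apply/eqP => /(congr1 val) /=; rewrite x0.
    by exists (Ordinal t0); apply/eqP => /(congr1 val) /= E; move: xn0; rewrite -E.
  have /connectP [p pth lst] := conn x y.
  case: p pth lst => [|z p] /=; first by move=> _ E; move: yx; rewrite E eqxx.
  by move=> /andP [exz _] _; exists z.
have homof (m : nat) (H : 'M[Real]_m) (phi : 'I_t -> 'I_m) :
    (forall i j, H i j = H j i) ->
    (forall p : 'I_t * 'I_t, (p.1 < p.2)%N && e p.1 p.2 -> 0 < H (phi p.1) (phi p.2)) ->
    forall x y, e x y -> 0 < H (phi x) (phi y).
  move=> Hs pos x y exy; case: (ltngtP x y) => xy.
  - by apply: (pos (x, y)); rewrite /= xy exy.
  - by rewrite Hs; apply: (pos (y, x)); rewrite /= xy esym exy.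
  - by move: exy; rewrite (val_inj xy) eirr.
have KqE (a b : 'I_q) : (0 < Kq q a b) = (a != b).
  by rewrite /Kq mxE; case: (a != b); rewrite ?ltr01 ?ltxx.
have HEq : MconvCol e 'I_q.
  move=> c1 c2 pc1 pc2 i Hi.
  have Sof (c : 'I_t -> 'I_q) : properc e c -> hsupport (chromatic_fun e (Kq q)) (mono c).
    move=> pc; apply/(hsupp_char e (mono c) _).
      by move=> a b; rewrite /Kq mxE ler0n.
    exists (finfun c); split.
      by move=> p /andP [_ ep]; rewrite !ffunE KqE; apply/eqP; apply: pc.
    by move=> v; rewrite monoE; apply: eq_card => x; rewrite !inE ffunE.
  have Hi' : (mono c2 i < mono c1 i)%N by rewrite !monoE.
  have [j [Hj [c [Sc [ci [cj ck]]]]]] :=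
    Hq (mono c1) (mono c2) (Sof _ pc1) (Sof _ pc2) i Hi'.
  have /(hsupp_char e c _) [|f3 [pos3 cnt3]] := Sc.
    by move=> a b; rewrite /Kq mxE ler0n.
  exists j; split; first by move: Hj; rewrite !monoE.
  exists (fun x => f3 x); split.
    move=> x y exy E.
    have Ks (a b : 'I_q) : Kq q a b = Kq q b a by rewrite /Kq !mxE eq_sym.
    have := homof q (Kq q) (fun x => f3 x) Ks pos3 x y exy.
    by rewrite KqE E eqxx.
  split; first by rewrite -cnt3 ci monoE.
  split; first by rewrite -cnt3 cj monoE.
  by move=> k ki kj; rewrite -cnt3 ck // monoE.
have HE := L1 eirr tq HEq.
have [Gsym Gnn] := wG.
have Gs (a b : 'I_n) : G a b = G b a by rewrite -[in LHS]Gsym mxE.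
pose A := fun u v : 'I_n => 0 < G u v.
have Asym : ssrbool.symmetric A by move=> u v; rewrite /A Gs.
have AK : forall v z u w, A v z -> A u w -> A v u \/ A v w.
  by move=> v z u w; apply: Kprop.
move=> a b Sa Sb i Hi.
have [phi [posphi cphi]] := (hsupp_char e a Gnn).1 Sa.
have [psi [pospsi cpsi]] := (hsupp_char e b Gnn).1 Sb.
have hphi : hom e A (fun x => phi x) := homof n G (fun x => phi x) Gs posphi.
have hpsi : hom e A (fun x => psi x) := homof n G (fun x => psi x) Gs pospsi.
have Hi' : (cntf (fun x => psi x) i < cntf (fun x => phi x) i)%N by rewrite -cphi -cpsi.
have [j [Hj [phi' [hphi' [c1 [c2 c3]]]]]] :=
  comb_main eirr enb Asym AK (HE _) hphi hpsi Hi'.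
exists j; split; first by rewrite cphi cpsi.
exists (mono phi'); split.
  apply/(hsupp_char e _ Gnn); exists (finfun phi'); split.
    by move=> p /andP [_ ep]; rewrite !ffunE; apply: hphi'.
  by move=> v; rewrite monoE; apply: eq_card => x; rewrite !inE ffunE.
split; first by rewrite monoE c1 cphi.
split; first by rewrite monoE c2 cphi.
by move=> k ki kj; rewrite monoE c3 // cphi.
Qed.
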